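(* Let $n\ge1$, $0<\hat\theta<1$ with $n\hat\theta$ an integer, and $\alpha>0$. Define $\Delta=\tfrac12\log(n+1)-H_n(\hat\theta)$ and suppose $\alpha+\Delta\le n\hat\theta^2(1-\hat\theta)^2/8$. Then there is a solution $\gamma_\alpha>0$ of $-\log P_{\mathrm{PBR},n}\big(\hat\theta\,\big|\,\varphi(\gamma_\alpha,\hat\theta)\big)=\alpha$ satisfying $$\gamma_\alpha\in\sqrt{2(\alpha+\Delta)}\left(1+\frac52\frac{\sqrt{\alpha+\Delta}}{\sqrt{n\hat\theta(1-\hat\theta)}}[-1,1]\right)^{-1/2},$$ i.e. $\sqrt{2(\alpha+\Delta)}(1+\epsilon)^{-1/2}\le\gamma_\alpha\le\sqrt{2(\alpha+\Delta)}(1-\epsilon)^{-1/2}$ with $\epsilon=\frac52\sqrt{\alpha+\Delta}/\sqrt{n\hat\theta(1-\hat\theta)}$.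
   Context: Logarithms are natural. $H_n(t)=-nt\log t-n(1-t)\log(1-t)-\log\binom{n}{nt}-\tfrac12\log(n+1)$. $P_{\mathrm{PBR},n}(t|\varphi)=\varphi^{nt}(1-\varphi)^{n(1-t)}(n+1)\binom{n}{nt}$ if $t\ge\varphi$, and $=t^{nt}(1-t)^{n(1-t)}(n+1)\binom{n}{nt}$ otherwise. With $\hat\sigma=\sqrt{\hat\theta(1-\hat\theta)/n}$, $\varphi(\gamma,\hat\theta)=\hat\theta-\hat\sigma\gamma$. *)

(* Defs.v *)
From Stdlib Require Import Reals Lra ZArith.
Open Scope R_scope.

(* n*t as a natural number; meaningful when n*t is a nonnegative integer
   (the only case used by the statement). *)
Definition nt (n : nat) (t : R) : nat := Z.to_nat (Int_part (INR n * t)).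

Definition binomR (n : nat) (t : R) : R := C n (nt n t).

Definition Hn (n : nat) (t : R) : R :=
  - INR n * t * ln t - INR n * (1 - t) * ln (1 - t)
  - ln (binomR n t) - / 2 * ln (INR n + 1).

(* P_PBR,n(t | phi); the exponents n t and n(1-t) are the integers nt and n - nt. *)
Definition P_PBR (n : nat) (t phi : R) : R :=
  if Rle_dec phi t then
    phi ^ (nt n t) * (1 - phi) ^ (n - nt n t) * (INR n + 1) * binomR n t
  else
    t ^ (nt n t) * (1 - t) ^ (n - nt n t) * (INR n + 1) * binomR n t.

Definition sigma_hat (n : nat) (th : R) : R := sqrt (th * (1 - th) / INR n).

Definition phiPBR (n : nat) (g th : R) : R := th - sigma_hat n th * g.

Definition DeltaPBR (n : nat) (th : R) : R := / 2 * ln (INR n + 1) - Hn n th.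

(* Main.v *)
Require Import Defs.
From Coquelicot Require Import Coquelicot.
From Stdlib Require Import Reals Lra Psatz ZArith Lia Ranalysis5.
Open Scope R_scope.

Lemma mvt_le (h dh : R -> R) (x : R) : 0 <= x ->
  (forall c, 0 <= c <= x -> is_derive h c (dh c)) ->
  (forall c, 0 <= c <= x -> dh c <= 0) -> h x <= h 0.
Proof.
  intros Hx Hd Hs.
  destruct (MVT_gen h 0 x dh) as [c [Hc Heq]].
  - intros y Hy. apply Hd. rewrite Rmin_left in Hy by lra. rewrite Rmax_right in Hy by lra. lra.
  - intros y Hy. rewrite Rmin_left in Hy by lra. rewrite Rmax_right in Hy by lra.
    apply continuity_pt_filterlim. apply (ex_derive_continuous (K:=R_AbsRing) (V:=R_NormedModule)). eexists. apply Hd. lra.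
  - rewrite Rmin_left in Hc by lra. rewrite Rmax_right in Hc by lra.
    assert (dh c <= 0) by (apply Hs; lra). nra.
Qed.

Lemma lnA x : 0 <= x < 1 -> ln (1 - x) <= - x - x^2/2 - x^3/3.
Proof.
  intros Hx.
  set (h := fun t => ln (1 - t) + t + t^2/2 + t^3/3).
  assert (h x <= h 0).
  { apply (mvt_le h (fun t => - t^3 / (1 - t))); [lra| |].
    - intros c Hc. unfold h. auto_derive. lra. field. lra.
    - intros c Hc. assert (0 < / (1 - c)) by (apply Rinv_0_lt_compat; lra).
      unfold Rdiv. assert (0 <= c^3) by (apply pow_le; lra). nra. }
  unfold h in H. repeat rewrite Rminus_0_r in H; rewrite ln_1 in H. lra.
Qed.

Lemma lnB y : 0 <= y -> ln (1 + y) <= y - y^2/2 + y^3/3.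
Proof.
  intros Hy.
  set (h := fun t => ln (1 + t) - t + t^2/2 - t^3/3).
  assert (h y <= h 0).
  { apply (mvt_le h (fun t => - t^3 / (1 + t))); [lra| |].
    - intros c Hc. unfold h. auto_derive. lra. field. lra.
    - intros c Hc. assert (0 < / (1 + c)) by (apply Rinv_0_lt_compat; lra).
      unfold Rdiv. assert (0 <= c^3) by (apply pow_le; lra). nra. }
  unfold h in H. repeat rewrite Rplus_0_r in H; rewrite ln_1 in H. lra.
Qed.

Lemma lnC x : 0 <= x <= 1/4 -> - x - x^2/2 - 4/9 * x^3 <= ln (1 - x).
Proof.
  intros Hx.
  set (h := fun t => - ln (1 - t) - t - t^2/2 - 4/9 * t^3).
  assert (h x <= h 0).
  { apply (mvt_le h (fun t => t^2 * (1 - 4/3 * (1 - t)) / (1 - t))); [lra| |].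
    - intros c Hc. unfold h. auto_derive. lra. field. lra.
    - intros c Hc. assert (0 < / (1 - c)) by (apply Rinv_0_lt_compat; lra).
      unfold Rdiv. assert (0 <= c^2) by (apply pow_le; lra).
      assert (c^2 * (1 - 4/3 * (1 - c)) <= 0) by nra. nra. }
  unfold h in H. repeat rewrite Rminus_0_r in H; rewrite ln_1 in H. lra.
Qed.

Lemma lnD y : 0 <= y -> y - y^2/2 <= ln (1 + y).
Proof.
  intros Hy.
  set (h := fun t => - ln (1 + t) + t - t^2/2).
  assert (h y <= h 0).
  { apply (mvt_le h (fun t => - t^2 / (1 + t))); [lra| |].
    - intros c Hc. unfold h. auto_derive. lra. field. lra.
    - intros c Hc. assert (0 < / (1 + c)) by (apply Rinv_0_lt_compat; lra).
      unfold Rdiv. assert (0 <= c^2) by (apply pow_le; lra). nra. }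
  unfold h in H. repeat rewrite Rplus_0_r in H; rewrite ln_1 in H. lra.
Qed.
Lemma C_pos n j : 0 < C n j.
Proof.
  unfold C. apply Rdiv_lt_0_compat. apply lt_0_INR, lt_O_fact.
  apply Rmult_lt_0_compat; apply lt_0_INR, lt_O_fact.
Qed.

Lemma sum_bound (f : nat -> R) (M : R) (m : nat) :
  (forall j, (j <= m)%nat -> f j <= M) -> sum_f_R0 f m <= INR (S m) * M.
Proof.
  induction m as [|m IH]; intros Hf.
  - simpl. specialize (Hf 0%nat (le_n _)). lra.
  - change (sum_f_R0 f (S m)) with (sum_f_R0 f m + f (S m)).
    rewrite (S_INR (S m)).
    assert (sum_f_R0 f m <= INR (S m) * M) by (apply IH; intros; apply Hf; lia).
    assert (f (S m) <= M) by (apply Hf; lia). lra.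
Qed.

Lemma mode (n k : nat) (p q : R) : (0 < k < n)%nat ->
  p * INR n = INR k -> q * INR n = INR n - INR k ->
  1 <= (INR n + 1) * (C n k * p ^ k * q ^ (n - k)).
Proof.
  intros Hk Hp Hq.
  assert (HN : 0 < INR n) by (apply lt_0_INR; lia).
  assert (HKN : INR k < INR n) by (apply lt_INR; lia).
  assert (HK0 : 0 < INR k) by (apply lt_0_INR; lia).
  assert (Hp0 : 0 < p) by nra. assert (Hq0 : 0 < q) by nra.
  assert (Hpq : p + q = 1) by nra.
  set (b := fun j => C n j * p ^ j * q ^ (n - j)).
  assert (Hb0 : forall j, 0 <= b j).
  { intros j. unfold b. pose proof (C_pos n j).
    pose proof (pow_lt p j Hp0). pose proof (pow_lt q (n-j) Hq0).
    apply Rlt_le. apply Rmult_lt_0_compat; [apply Rmult_lt_0_compat|]; lra. }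
  assert (Hstep : forall j, (j < n)%nat ->
     b (S j) * INR (S j) * q = b j * INR (n - j) * p).
  { intros j Hj. unfold b. rewrite pascal_step3 by lia.
    assert (E : q ^ (n - j) = q * q ^ (n - S j)).
    { replace (n - j)%nat with (S (n - S j)) by lia. reflexivity. }
    rewrite E. simpl pow.
    assert (INR (S j) <> 0) by (apply not_0_INR; lia). field. auto. }
  assert (Hup : forall j, (j < k)%nat -> b j <= b (S j)).
  { intros j Hj. specialize (Hstep j ltac:(lia)).
    rewrite minus_INR in Hstep by lia. rewrite S_INR in Hstep.
    assert (HJ : INR j + 1 <= INR k) by (rewrite <- S_INR; apply le_INR; lia).
    assert (HJ0 : 0 <= INR j) by apply pos_INR.
    assert (Hineq : (INR j + 1) * q <= (INR n - INR j) * p) by nra.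
    pose proof (Hb0 j). pose proof (Hb0 (S j)).
    assert (b j * ((INR j + 1) * q) <= b (S j) * ((INR j + 1) * q)) by nra.
    apply Rmult_le_reg_r with ((INR j + 1) * q). nra. lra. }
  assert (Hdown : forall j, (k <= j < n)%nat -> b (S j) <= b j).
  { intros j Hj. specialize (Hstep j ltac:(lia)).
    rewrite minus_INR in Hstep by lia. rewrite S_INR in Hstep.
    assert (HJ : INR k <= INR j) by (apply le_INR; lia).
    assert (HJ0 : 0 <= INR j) by apply pos_INR.
    assert (Hineq : (INR n - INR j) * p <= (INR j + 1) * q) by nra.
    pose proof (Hb0 j). pose proof (Hb0 (S j)).
    assert (b (S j) * ((INR j + 1) * q) <= b j * ((INR j + 1) * q)) by nra.
    apply Rmult_le_reg_r with ((INR j + 1) * q). nra. lra. }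
  assert (H1 : forall d, (d <= k)%nat -> b (k - d)%nat <= b k).
  { induction d as [|d IH]; intros Hd.
    - rewrite Nat.sub_0_r. lra.
    - assert (b (k - S d)%nat <= b (k - d)%nat).
      { replace (k - d)%nat with (S (k - S d)) by lia. apply Hup. lia. }
      specialize (IH ltac:(lia)). lra. }
  assert (H2 : forall d, (k + d <= n)%nat -> b (k + d)%nat <= b k).
  { induction d as [|d IH]; intros Hd.
    - rewrite Nat.add_0_r. lra.
    - assert (b (k + S d)%nat <= b (k + d)%nat).
      { replace (k + S d)%nat with (S (k + d)) by lia. apply Hdown. lia. }
      specialize (IH ltac:(lia)). lra. }
  assert (Hall : forall j, (j <= n)%nat -> b j <= b k).
  { intros j Hj. destruct (Nat.le_gt_cases j k).
    - replace j with (k - (k - j))%nat by lia. apply H1. lia.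
    - replace j with (k + (j - k))%nat by lia. apply H2. lia. }
  pose proof (sum_bound b (b k) n Hall) as Hs.
  assert (Hsum : sum_f_R0 b n = 1).
  { unfold b. rewrite <- binomial. rewrite Hpq. apply pow1. }
  rewrite Hsum, S_INR in Hs. unfold b in Hs. lra.
Qed.
Lemma kfacts n th z : (1 <= n)%nat -> 0 < th -> th < 1 -> INR n * th = IZR z ->
  INR (nt n th) = INR n * th /\ (0 < nt n th < n)%nat.
Proof.
  intros Hn H0 H1 Hz.
  assert (HN : 0 < INR n) by (apply lt_0_INR; lia).
  assert (Hz0 : (0 < z)%Z) by (apply lt_IZR; nra).
  assert (E : INR (nt n th) = INR n * th).
  { unfold nt. rewrite Hz. rewrite <- (Int_part_spec (IZR z) z) by lra.
    rewrite INR_IZR_INZ, Z2Nat.id by lia. auto. }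
  split; auto. split.
  - apply INR_lt. simpl. nra.
  - apply INR_lt. nra.
Qed.

Lemma alg_up (N th r lo : R) : 0 < th < 1 -> 0 < r -> r ^ 2 = N * (th * (1 - th)) ->
  let d := th * (1 - th) * lo / r in
  (N * th) * (d / th + (d / th) ^ 2 / 2 + 4 / 9 * (d / th) ^ 3)
  - (N * (1 - th)) * (d / (1 - th) - (d / (1 - th)) ^ 2 / 2)
  = lo ^ 2 / 2 + 4 / 9 * (1 - th) ^ 2 * lo ^ 3 / r.
Proof.
  intros Hth Hr Hr2 d. unfold d.
  assert (EN : N = r ^ 2 / (th * (1 - th))).
  { rewrite Hr2. field. split; lra. }
  rewrite EN. field. repeat split; lra.
Qed.

Lemma alg_low (N th r lo : R) : 0 < th < 1 -> 0 < r -> r ^ 2 = N * (th * (1 - th)) ->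
  let d := th * (1 - th) * lo / r in
  (N * th) * (d / th + (d / th) ^ 2 / 2 + (d / th) ^ 3 / 3)
  - (N * (1 - th)) * (d / (1 - th) - (d / (1 - th)) ^ 2 / 2 + (d / (1 - th)) ^ 3 / 3)
  = lo ^ 2 / 2 + (1 - th) ^ 2 * lo ^ 3 / (3 * r) - th ^ 2 * lo ^ 3 / (3 * r).
Proof.
  intros Hth Hr Hr2 d. unfold d.
  assert (EN : N = r ^ 2 / (th * (1 - th))).
  { rewrite Hr2. field. split; lra. }
  rewrite EN. field. repeat split; lra.
Qed.

Lemma ln4 a b c d : 0 < a -> 0 < b -> 0 < c -> 0 < d ->
  ln (a * (b * c * d)) = ln a + ln b + ln c + ln d.
Proof.
  intros. rewrite !ln_mult; try lra; repeat apply Rmult_lt_0_compat; lra.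
Qed.

Lemma sqdiv A B : 0 <= A -> 0 < B -> (sqrt A / sqrt B) ^ 2 * B = A.
Proof.
  intros HA HB. assert (0 < sqrt B) by (apply sqrt_lt_R0; lra).
  replace ((sqrt A / sqrt B) ^ 2) with (sqrt A ^ 2 / sqrt B ^ 2) by (field; lra).
  rewrite !pow2_sqrt by lra. field. lra.
Qed.

Lemma lnsplit1 th d : 0 < th -> d < th -> ln th - ln (th - d) = - ln (1 - d / th).
Proof.
  intros. replace (th - d) with (th * (1 - d / th)) by (field; lra).
  rewrite ln_mult. ring. lra.
  assert (d / th < 1). { apply (Rmult_lt_reg_r th); [lra|]. unfold Rdiv. rewrite Rmult_assoc, Rinv_l; lra. }
  lra.
Qed.

Lemma lnsplit2 th d : th < 1 -> 0 <= d ->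
  ln (1 - th) - ln (1 - (th - d)) = - ln (1 + d / (1 - th)).
Proof.
  intros. replace (1 - (th - d)) with ((1 - th) * (1 + d / (1 - th))) by (field; lra).
  assert (0 <= d / (1 - th)) by (apply Rdiv_le_0_compat; lra).
  rewrite ln_mult by lra. ring.
Qed.

Lemma ln4' a b c d : 0 < a -> 0 < b -> 0 < c -> 0 < d ->
  ln (a * b * c * d) = ln a + ln b + ln c + ln d.
Proof.
  intros. rewrite !ln_mult; try lra; repeat apply Rmult_lt_0_compat; lra.
Qed.

Theorem mainTheorem12 (n : nat) (th alpha : R) (z : Z) :
  (1 <= n)%nat -> 0 < th -> th < 1 -> INR n * th = IZR z -> 0 < alpha ->
  alpha + DeltaPBR n th <= INR n * th ^ 2 * (1 - th) ^ 2 / 8 ->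
  let eps := 5 / 2 * sqrt (alpha + DeltaPBR n th) / sqrt (INR n * th * (1 - th)) in
  exists g : R, 0 < g /\
    - ln (P_PBR n th (phiPBR n g th)) = alpha /\
    sqrt (2 * (alpha + DeltaPBR n th)) / sqrt (1 + eps) <= g /\
    g <= sqrt (2 * (alpha + DeltaPBR n th)) / sqrt (1 - eps).
Proof.
  intros Hn Hth0 Hth1 Hz Hal HD eps.
  destruct (kfacts n th z Hn Hth0 Hth1 Hz) as [Hk Hkn].
  assert (HN : 0 < INR n) by (apply lt_0_INR; lia).
  assert (Hnk : INR (n - nt n th) = INR n * (1 - th)).
  { rewrite minus_INR by lia. rewrite Hk. ring. }
  assert (HC : 0 < C n (nt n th)) by apply C_pos.
  assert (Hthk : 0 < th ^ nt n th) by (apply pow_lt; lra).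
  assert (Hthk' : 0 < (1 - th) ^ (n - nt n th)) by (apply pow_lt; lra).
  assert (HDelta : DeltaPBR n th = ln (INR n + 1) + ln (C n (nt n th))
        + INR (nt n th) * ln th + INR (n - nt n th) * ln (1 - th)).
  { unfold DeltaPBR, Defs.Hn, binomR. rewrite Hk, Hnk. field. }
  assert (HD0 : 0 <= DeltaPBR n th).
  { pose proof (mode n (nt n th) th (1 - th) Hkn ltac:(rewrite Hk; ring)
        ltac:(rewrite Hk; ring)) as Hm.
    rewrite <- ln_1. rewrite HDelta. rewrite <- !ln_pow by lra.
    rewrite <- ln4 by lra.
    apply ln_le; [lra|]. lra. }
  set (k := nt n th) in *.
  set (D := alpha + DeltaPBR n th) in *.
  assert (HD1 : 0 < D) by (unfold D; lra).
  set (S := sqrt D) in *.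
  assert (HS : 0 < S) by (apply sqrt_lt_R0; lra).
  assert (HS2 : S ^ 2 = D) by (unfold S; apply pow2_sqrt; lra).
  assert (Hn0 : 0 < INR n * th * (1 - th)).
  { apply Rmult_lt_0_compat; [apply Rmult_lt_0_compat|]; lra. }
  set (r := sqrt (INR n * th * (1 - th))) in *.
  assert (Hr : 0 < r) by (apply sqrt_lt_R0; lra).
  assert (Hr2 : r ^ 2 = INR n * (th * (1 - th))).
  { unfold r. rewrite pow2_sqrt by lra. ring. }
  assert (Ha0 : 0 < th * (1 - th)) by nra.
  assert (Ha : th * (1 - th) <= 1/4) by (pose proof (pow2_ge_0 (th - 1/2)); nra).
  assert (HK : 8 * S ^ 2 <= r ^ 2 * (th * (1 - th))).
  { rewrite HS2, Hr2. nra. }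
  assert (Heps : eps = 5 / 2 * S / r) by reflexivity.
  assert (Heps0 : 0 < eps) by (rewrite Heps; apply Rdiv_lt_0_compat; lra).
  assert (Heps2 : eps ^ 2 <= 25 / 128).
  { assert (E : eps ^ 2 * r ^ 2 = 25 / 4 * S ^ 2) by (rewrite Heps; field; lra).
    assert (0 < r ^ 2) by nra.
    apply (Rmult_le_reg_r (r ^ 2)); [lra|]. rewrite E. nra. }
  assert (Heps1 : eps < 45 / 100) by nra.
  set (lo := sqrt (2 * D) / sqrt (1 + eps)).
  set (hi := sqrt (2 * D) / sqrt (1 - eps)).
  assert (Hlo2 : lo ^ 2 * (1 + eps) = 2 * D) by (apply sqdiv; lra).
  assert (Hhi2 : hi ^ 2 * (1 - eps) = 2 * D) by (apply sqdiv; lra).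
  assert (Hlo0 : 0 < lo).
  { apply Rdiv_lt_0_compat; apply sqrt_lt_R0; lra. }
  assert (Hhi0 : 0 < hi).
  { apply Rdiv_lt_0_compat; apply sqrt_lt_R0; lra. }
  assert (Hlolo : lo ^ 2 <= 2 * S ^ 2) by nra.
  assert (Hlor : lo <= r / 4) by nra.
  assert (Hlo3 : lo < 3 / 2 * S) by nra.
  assert (Hhihi : hi ^ 2 < 4 * S ^ 2) by nra.
  assert (Hhi3 : hi < 2 * S) by nra.
  assert (Hhir : hi < r) by nra.
  assert (Hlohi : lo < hi) by nra.
  set (s := sigma_hat n th).
  assert (Hs : s * r = th * (1 - th)).
  { unfold s, sigma_hat, r. rewrite <- sqrt_mult.
    replace (th * (1 - th) / INR n * (INR n * th * (1 - th)))
      with ((th * (1 - th)) * (th * (1 - th))) by (field; lra).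
    apply sqrt_square; lra.
    apply Rdiv_le_0_compat; lra. lra. }
  assert (Hs' : s = th * (1 - th) / r) by (rewrite <- Hs; field; lra).
  assert (Hs0 : 0 < s) by (rewrite Hs'; apply Rdiv_lt_0_compat; lra).
  set (H := fun g => INR k * (ln th - ln (th - s * g))
                   + INR (n - k) * (ln (1 - th) - ln (1 - (th - s * g)))).
  assert (Hshi : s * hi < th).
  { rewrite Hs'. apply (Rmult_lt_reg_r r); [lra|].
    replace (th * (1 - th) / r * hi * r) with (th * (1 - th) * hi) by (field; lra). nra. }
  assert (Hkn0 : INR k = INR n * th) by exact Hk.
  assert (Hform : forall g, 0 <= s * g < th ->
     H g = INR k * (- ln (1 - s * g / th)) + INR (n - k) * (- ln (1 + s * g / (1 - th)))).
  { intros g Hg. unfold H. rewrite lnsplit1, lnsplit2 by lra. reflexivity. }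
  assert (Hpl : forall g, 0 <= s * g < th ->
     - ln (P_PBR n th (phiPBR n g th)) = H g - DeltaPBR n th).
  { intros g Hg. unfold P_PBR, phiPBR, binomR. fold k. fold s.
    destruct (Rle_dec (th - s * g) th) as [_|Hc]; [|exfalso; lra].
    rewrite ln4'.
    2: apply pow_lt; lra. 2: apply pow_lt; lra. 2: lra. 2: exact HC.
    rewrite !ln_pow by lra. rewrite HDelta. unfold H. ring. }
  assert (Hslo : 0 <= s * lo < th) by (split; nra).
  assert (Hnk2 : INR (n - k) = INR n * (1 - th)) by exact Hnk.
  assert (Hup : H lo < D).
  { rewrite (Hform lo Hslo).
    set (d := th * (1 - th) * lo / r).
    assert (Hd : s * lo = d) by (unfold d; rewrite Hs'; field; lra).
    rewrite Hd.
    assert (Hx : 0 <= d / th <= 1/4).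
    { unfold d. split. apply Rdiv_le_0_compat; [|lra]. apply Rdiv_le_0_compat; nra.
      replace (th * (1 - th) * lo / r / th) with ((1 - th) * lo / r) by (field; lra).
      apply (Rmult_le_reg_r r); [lra|].
      replace ((1 - th) * lo / r * r) with ((1 - th) * lo) by (field; lra). nra. }
    assert (Hy : 0 <= d / (1 - th)).
    { unfold d. apply Rdiv_le_0_compat; [|lra]. apply Rdiv_le_0_compat; nra. }
    pose proof (lnC _ Hx) as L1. pose proof (lnD _ Hy) as L2.
    assert (HkP : 0 <= INR k) by apply pos_INR.
    assert (HnkP : 0 <= INR (n - k)) by apply pos_INR.
    assert (B : INR k * - ln (1 - d / th) + INR (n - k) * - ln (1 + d / (1 - th)) <=
      (INR n * th) * (d / th + (d / th) ^ 2 / 2 + 4 / 9 * (d / th) ^ 3)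
      - (INR n * (1 - th)) * (d / (1 - th) - (d / (1 - th)) ^ 2 / 2)).
    { rewrite <- Hkn0, <- Hnk2. nra. }
    unfold d in B. rewrite alg_up in B by lra. fold d in B.
    assert (HA : 4/9*(1-th)^2*lo^3 < 5/4*S*lo^2).
    { assert (4/9*(1-th)^2*lo < 5/4*S) by nra. nra. }
    assert (HB : 4/9*(1-th)^2*lo^3/r < eps*lo^2/2).
    { rewrite Heps. unfold Rdiv. replace (5 * / 2 * S * / r * lo ^ 2 * / 2)
        with (5/4*S*lo^2 * / r) by (field; lra).
      apply Rmult_lt_compat_r; [apply Rinv_0_lt_compat; lra| lra]. }
    lra. }
  assert (Hshi' : 0 <= s * hi < th) by (split; nra).
  assert (Hlow : D < H hi).
  { rewrite (Hform hi Hshi').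
    set (d := th * (1 - th) * hi / r).
    assert (Hd : s * hi = d) by (unfold d; rewrite Hs'; field; lra).
    rewrite Hd. rewrite Hd in Hshi'.
    assert (Hx : 0 <= d / th < 1).
    { split. unfold d. apply Rdiv_le_0_compat; [|lra]. apply Rdiv_le_0_compat; nra.
      apply (Rmult_lt_reg_r th); [lra|].
      replace (d / th * th) with d by (field; lra). lra. }
    assert (Hy : 0 <= d / (1 - th)).
    { unfold d. apply Rdiv_le_0_compat; [|lra]. apply Rdiv_le_0_compat; nra. }
    pose proof (lnA _ Hx) as L1. pose proof (lnB _ Hy) as L2.
    assert (HkP : 0 <= INR k) by apply pos_INR.
    assert (HnkP : 0 <= INR (n - k)) by apply pos_INR.
    assert (B : (INR n * th) * (d / th + (d / th) ^ 2 / 2 + (d / th) ^ 3 / 3)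
      - (INR n * (1 - th)) * (d / (1 - th) - (d / (1 - th)) ^ 2 / 2 + (d / (1 - th)) ^ 3 / 3)
      <= INR k * - ln (1 - d / th) + INR (n - k) * - ln (1 + d / (1 - th))).
    { rewrite <- Hkn0, <- Hnk2. nra. }
    unfold d in B. rewrite alg_low in B by lra. fold d in B.
    assert (HA : th^2*hi^3 < 15/4*S*hi^2).
    { assert (th^2 < 1) by nra. assert (th^2*hi < 15/4*S) by nra. nra. }
    assert (HB : th^2*hi^3/(3*r) < eps*hi^2/2).
    { rewrite Heps. unfold Rdiv. replace (5 * / 2 * S * / r * hi ^ 2 * / 2)
        with (15/4*S*hi^2 * / (3 * r)) by (field; lra).
      replace (th ^ 2 * hi ^ 3 * / (3 * r)) with (th^2*hi^3 * / (3 * r)) by reflexivity.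
      apply Rmult_lt_compat_r; [apply Rinv_0_lt_compat; lra| lra]. }
    assert (0 <= (1 - th) ^ 2 * hi ^ 3 / (3 * r)).
    { apply Rdiv_le_0_compat; [|lra]. apply Rmult_le_pos; [apply pow2_ge_0| apply pow_le; lra]. }
    lra. }
  assert (Hcont : forall g, lo <= g <= hi -> continuity_pt (fun g => H g - D) g).
  { intros g Hg. assert (0 <= s * g <= s * hi) by (split; nra).
    assert (Hex : ex_derive (fun g => H g - D) g).
    { unfold H. auto_derive. repeat split; lra. }
    apply continuity_pt_filterlim.
    exact (ex_derive_continuous (K:=R_AbsRing) (V:=R_NormedModule) (fun g => H g - D) g Hex). }
  destruct (IVT_interv (fun g => H g - D) lo hi Hcont Hlohi ltac:(lra) ltac:(lra))
    as [g [Hg Hgeq]].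
  exists g. split; [lra|]. split.
  - assert (s * lo <= s * g <= s * hi) by (split; apply Rmult_le_compat_l; lra).
    rewrite Hpl by lra. unfold D in Hgeq. lra.
  - exact Hg.
Qed.
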